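(* Let $P(x)=a_2x^2+a_1x+a_0$, $R(x)=b_2x^2+b_1x$ and $Q(x)=q_2x^2+q_1x+q_0$ be complex polynomials with $a_2,b_2,q_2\ne0$. For $n\ge0$ and $\alpha\in\mathbb C$ let $\tilde F(n,\alpha)=\prod_{z\in Q^{-1}(P^{-1}(R^{-n}(\alpha)))}z$, the product of the $2^{n+2}$ roots, counted with multiplicity, of $R^{\circ n}(P(Q(z)))=\alpha$. Then $\tilde F(n,\alpha)=\tilde c_{n,1}\alpha+\tilde c_{n,0}$ with $\tilde c_{n,1}=-\frac{b_2}{(q_2^2a_2b_2)^{2^n}}$ and $\tilde c_{n,0}=\frac{1}{(q_2^2a_2b_2)^{2^n}}\big(\tilde H(n)-\frac{b_1}{2}\big)$, where $\tilde H(0)=a_2b_2\big(q_0^2+q_0\frac{a_1}{a_2}+\frac{a_0}{a_2}\big)+\frac{b_1}{2}$ and $\tilde H(n)=\tilde H(n-1)^2+\frac{b_1(2-b_1)}{4}$ for $n\ge1$.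
   Context: $R^{\circ n}$ denotes the $n$-fold composition ($R^{\circ0}=\mathrm{id}$); $R^{-n}(\alpha)$ is the multiset of roots of $R^{\circ n}(w)=\alpha$, and for a polynomial $g$ and multiset $S$, $g^{-1}(S)$ is the multiset union of the roots of $g(z)=w$ over $w\in S$. *)

(* Defs.v *)
From HB Require Import structures.
From mathcomp Require Import all_boot all_order all_algebra.
From mathcomp Require Import complex.
From mathcomp Require Import reals.
Set Implicit Arguments. Unset Strict Implicit. Unset Printing Implicit Defensive.
Import Order.TTheory GRing.Theory Num.Theory.
Local Open Scope ring_scope.

(* The multiset of roots (with multiplicity) of a polynomial over an
   algebraically closed field, as a sequence r with p = lc(p) * prod (X - z). *)
Definition rootseq (F : closedFieldType) (p : {poly F}) : seq F :=
  sval (closed_field_poly_normal p).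

Definition polypreim (F : closedFieldType) (g : {poly F}) (S : seq F) : seq F :=
  flatten [seq rootseq (g - w%:P) | w <- S].

Definition polyiter (F : nzRingType) (n : nat) (r : {poly F}) : {poly F} :=
  iter n (fun p => r \Po p) 'X.

Definition iterpreim (F : closedFieldType) (r : {poly F}) (n : nat) (alpha : F) : seq F :=
  rootseq (polyiter n r - alpha%:P).

Definition Ftilde (F : closedFieldType) (P R Q : {poly F}) (n : nat) (alpha : F) : F :=
  \prod_(z <- polypreim Q (polypreim P (iterpreim R n alpha))) z.

Fixpoint Htilde (F : fieldType) (a2 a1 a0 b2 b1 q0 : F) (n : nat) : F :=
  match n with
  | 0 => a2 * b2 * (q0 ^+ 2 + q0 * (a1 / a2) + a0 / a2) + b1 / 2
  | m.+1 => (Htilde a2 a1 a0 b2 b1 q0 m) ^+ 2 + b1 * (2 - b1) / 4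
  end.

(* Main.v *)
Require Import Defs.
From HB Require Import structures.
From mathcomp Require Import all_boot all_order all_algebra.
From mathcomp Require Import complex.
From mathcomp Require Import reals.
From mathcomp Require Import ring zify.
Import Order.TTheory GRing.Theory Num.Theory.
Local Open Scope ring_scope.

Section Gen.
Variable F : closedFieldType.
Implicit Types p : {poly F}.

Lemma rootseq_spec p : p = lead_coef p *: \prod_(z <- rootseq p) ('X - z%:P).
Proof. by rewrite /rootseq; case: (closed_field_poly_normal p). Qed.

Lemma prod_root_sub p c : p != 0 ->
  \prod_(z <- rootseq p) (c - z) = p.[c] / lead_coef p.
Proof.
move=> p0; rewrite [in RHS](rootseq_spec p) hornerZ horner_prod.
under [in RHS]eq_bigr do rewrite hornerXsubC.
by rewrite -(rootseq_spec p) mulrC mulKf ?lead_coef_eq0.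
Qed.

Lemma size_rootseq p : p != 0 -> size (rootseq p) = (size p).-1.
Proof.
move=> p0; rewrite [in RHS](rootseq_spec p) size_scale ?lead_coef_eq0 //.
by rewrite size_prod_XsubC.
Qed.

Lemma prod_seq_neg (s : seq F) :
  \prod_(z <- s) z = (-1) ^+ size s * \prod_(z <- s) (0 - z).
Proof.
elim: s => [|x s IH]; first by rewrite !big_nil mulr1.
rewrite !big_cons IH /= exprS; ring.
Qed.

Lemma prod_const_seq (T : Type) (s : seq T) (x : F) :
  \prod_(z <- s) x = x ^+ size s.
Proof.
elim: s => [|y s IH]; first by rewrite big_nil.
by rewrite big_cons IH exprS.
Qed.

Lemma quad_facts (a b c : F) : a != 0 ->
  size (a%:P * 'X^2 + b%:P * 'X + c%:P) = 3%N /\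
  lead_coef (a%:P * 'X^2 + b%:P * 'X + c%:P) = a.
Proof.
move=> a0.
have s1 : size (a%:P * 'X^2) = 3%N by rewrite mul_polyC size_scale // size_polyXn.
have s2 : (size (b%:P * 'X + c%:P)%R < 3)%N.
  rewrite (leq_ltn_trans (size_polyD _ _)) //.
  rewrite gtn_max (leq_ltn_trans (size_polyC_leq1 _)) // andbT.
  rewrite mul_polyC (leq_ltn_trans (size_scale_leq _ _)) // size_polyX //.
rewrite -addrA; split.
  by rewrite size_polyDl ?s1.
by rewrite lead_coefDl ?s1 // mul_polyC lead_coefZ lead_coefXn mulr1.
Qed.

End Gen.

Section Iter.
Variable F : closedFieldType.
Variables b2 b1 : F.
Hypothesis b20 : b2 != 0.
Let Rp : {poly F} := b2%:P * 'X^2 + b1%:P * 'X.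

Lemma Rp_facts : size Rp = 3%N /\ lead_coef Rp = b2.
Proof. by have := @quad_facts F b2 b1 0 b20; rewrite polyC0 addr0. Qed.

Lemma iter_facts n : size (polyiter n Rp) = (2 ^ n).+1 /\
  lead_coef (polyiter n Rp) = b2 ^+ (2 ^ n - 1).
Proof.
have [sR lR] := Rp_facts.
elim: n => [|n [sp lp]].
  by rewrite /polyiter /= size_polyX lead_coefX expr0.
have -> : polyiter n.+1 Rp = Rp \Po polyiter n Rp by [].
have k0 : (0 < 2 ^ n)%N by rewrite expn_gt0.
split.
  have := size_comp_poly Rp (polyiter n Rp); rewrite sR sp /=.
  case: (size _) => [|k] /= h.
    by move: h k0; lia.
  by rewrite h expnS.
rewrite lead_coef_comp ?sp ?ltnS // lR sR lp /= -exprM -exprS; congr (_ ^+ _).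
rewrite expnS; move: k0; lia.
Qed.

Lemma iter_horner n x : (polyiter n.+1 Rp).[x] =
  b2 * ((polyiter n Rp).[x]) ^+ 2 + b1 * (polyiter n Rp).[x].
Proof.
have -> : polyiter n.+1 Rp = Rp \Po polyiter n Rp by [].
by rewrite horner_comp /Rp !hornerE.
Qed.

End Iter.

Theorem lemma5p6 (R : realType) (a2 a1 a0 b2 b1 q2 q1 q0 : R[i]) :
  a2 != 0 -> b2 != 0 -> q2 != 0 ->
  forall (n : nat) (alpha : R[i]),
    Ftilde (a2%:P * 'X^2 + a1%:P * 'X + a0%:P)
           (b2%:P * 'X^2 + b1%:P * 'X)
           (q2%:P * 'X^2 + q1%:P * 'X + q0%:P) n alpha
    = (- b2 / (q2 ^+ 2 * a2 * b2) ^+ (2 ^ n)) * alpha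
      + (Htilde a2 a1 a0 b2 b1 q0 n - b1 / 2) / (q2 ^+ 2 * a2 * b2) ^+ (2 ^ n).
Proof.
move=> a20 b20 q20 n alpha.
set Pp := (a2%:P * 'X^2 + a1%:P * 'X + a0%:P).
set Rp := (b2%:P * 'X^2 + b1%:P * 'X).
set Qp := (q2%:P * 'X^2 + q1%:P * 'X + q0%:P).
have two0 : (2 : R[i]) != 0 by rewrite pnatr_eq0.
have four0 : (4 : R[i]) != 0 by rewrite pnatr_eq0.
rewrite /Ftilde /polypreim big_flatten big_map.
under eq_bigr => w _.
  have EQ : Qp - w%:P = q2%:P * 'X^2 + q1%:P * 'X + (q0 - w)%:P.
    by rewrite /Qp polyCB addrA.
  have [sQ lQ] := @quad_facts _ q2 q1 (q0 - w) q20.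
  have Q0 : Qp - w%:P != 0 by rewrite -size_poly_eq0 EQ sQ.
  rewrite prod_seq_neg size_rootseq // prod_root_sub // EQ sQ lQ !hornerE /=.
  have -> : (-1) ^+ 2 * (q2 * 0 * 0 + q0 - w) / q2 = (q0 - w) / q2 by field.
  over.
rewrite big_flatten big_map.
set cP := Pp.[q0].
under eq_bigr => u _.
  have EP : Pp - u%:P = a2%:P * 'X^2 + a1%:P * 'X + (a0 - u)%:P.
    by rewrite /Pp polyCB addrA.
  have [sP lP] := @quad_facts _ a2 a1 (a0 - u) a20.
  have P0 : Pp - u%:P != 0 by rewrite -size_poly_eq0 EP sP.
  rewrite prodf_div prod_const_seq size_rootseq // prod_root_sub // EP sP lP /=.
  have -> : (a2%:P * 'X^2 + a1%:P * 'X + (a0 - u)%:P).[q0] = cP - u.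
    by rewrite -EP hornerD hornerN hornerC.
  over.
rewrite /= /iterpreim.
have [sI lI] := @iter_facts _ b2 b1 b20 n.
have sI' : size (polyiter n Rp - alpha%:P) = (2 ^ n).+1.
  by rewrite size_polyDl // size_polyN sI (leq_ltn_trans (size_polyC_leq1 _)) // ltnS expn_gt0.
have lI' : lead_coef (polyiter n Rp - alpha%:P) = b2 ^+ (2 ^ n - 1).
  by rewrite lead_coefDl // size_polyN sI (leq_ltn_trans (size_polyC_leq1 _)) // ltnS expn_gt0.
have I0 : polyiter n Rp - alpha%:P != 0 by rewrite -size_poly_eq0 sI'.
rewrite prodf_div prod_const_seq prodf_div prod_const_seq size_rootseq // prod_root_sub // sI' lI' /=.
rewrite hornerD hornerN hornerC.
have key : forall m, b2 * (polyiter m Rp).[cP] = Htilde a2 a1 a0 b2 b1 q0 m - b1 / 2.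
  elim=> [|m IH].
    rewrite /polyiter /= hornerX /cP /Pp !(hornerD, hornerM, hornerC, hornerX, hornerXn). by field.
  rewrite [in LHS](@iter_horner _ b2 b1 m cP) /=.
  have -> : Htilde a2 a1 a0 b2 b1 q0 m = b2 * (polyiter m Rp).[cP] + b1 / 2.
    by rewrite IH; ring.
  by field.
rewrite -key.
have [N EN] : exists N, (2 ^ n)%N = N.+1 by exists (2 ^ n).-1; rewrite prednK // expn_gt0.
rewrite EN subn1 /=.
set x := horner _ cP. rewrite !exprMn (exprS b2).
have B0 : b2 ^+ N != 0 by rewrite expf_neq0.
have A0 : a2 ^+ N.+1 != 0 by rewrite expf_neq0.
have Q0 : q2 ^+ 2 ^+ N.+1 != 0 by rewrite !expf_neq0.
move: B0 A0 Q0; set B := b2 ^+ N; set A := a2 ^+ N.+1; set Q := q2 ^+ 2 ^+ N.+1 => B0 A0 Q0.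
field. by rewrite B0 b20 A0 expf_neq0.
Qed.
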